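(* Let $A,B,C,D$ be real random variables on a common probability space with finite second moments, $\mathrm{Var}(B)>0$, $\mathrm{Var}(D)>0$, $|\mathrm{Corr}(B,D)|<1$, $\mathbb{E}[A]\neq0$, $\mathbb{E}[C]\neq 0$, and set $R=\mathbb{E}[A]/\mathbb{E}[C]$. Let $n\ge1$ and let $(A_i,B_i,C_i,D_i)_{i=1,\dots,n}$ be i.i.d. copies of $(A,B,C,D)$. For $\alpha,\beta\in\mathbb{R}$ put $N_\alpha=\overline{A_n}+\alpha(\mathbb{E}[B]-\overline{B_n})$ and $M_\beta=\overline{C_n}+\beta(\mathbb{E}[D]-\overline{D_n})$. Let $$\alpha_o=\frac{\mathrm{Var}(D)\mathrm{Cov}(A,B)-R\,\mathrm{Var}(D)\mathrm{Cov}(B,C)+R\,\mathrm{Cov}(B,D)\mathrm{Cov}(C,D)-\mathrm{Cov}(B,D)\mathrm{Cov}(A,D)}{\mathrm{Var}(B)\mathrm{Var}(D)-\mathrm{Cov}(B,D)^2},$$ $$\beta_o=\frac{\mathrm{Cov}(B,D)\mathrm{Cov}(A,B)-R\,\mathrm{Cov}(B,D)\mathrm{Cov}(B,C)+R\,\mathrm{Var}(B)\mathrm{Cov}(C,D)-\mathrm{Var}(B)\mathrm{Cov}(A,D)}{R\big(\mathrm{Var}(B)\mathrm{Var}(D)-\mathrm{Cov}(B,D)^2\big)}.$$ Then $$\Phi(N_{\alpha_o},M_{\beta_o})-\Phi(\overline{A_n},\overline{C_n})=-\frac{1}{n\,\mathbb{E}[C]^2}\,\frac{\mathrm{Var}\Big(\big(R\,\mathrm{Cov}(B,C)-\mathrm{Cov}(A,B)\big)D-\big(R\,\mathrm{Cov}(C,D)-\mathrm{Cov}(A,D)\big)B\Big)}{\mathrm{Var}(B)\mathrm{Var}(D)-\mathrm{Cov}(B,D)^2}\le0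 .$$
   Context: For a random variable $X$, $\overline{X_n}=\frac1n\sum_{i=1}^n X_i$ denotes the sample mean of the i.i.d. copies $X_1,\dots,X_n$. For real random variables $X,Z$ with finite second moments and $\mathbb{E}[Z]\neq0$, define the first-order (delta-method) approximation of the variance of the ratio $X/Z$: $$\Phi(X,Z)=\frac{\mathrm{Var}(X)}{\mathbb{E}[Z]^2}+\frac{\mathbb{E}[X]^2}{\mathbb{E}[Z]^4}\mathrm{Var}(Z)-2\frac{\mathbb{E}[X]}{\mathbb{E}[Z]^3}\mathrm{Cov}(X,Z).$$ $\Phi(N_\alpha,M_\beta)$ is the paper's variance of the CV/CV ratio estimator $N_\alpha/M_\beta$ of $R$, and $\Phi(\overline{A_n},\overline{C_n})$ that of the Monte Carlo ratio estimator $\overline{A_n}/\overline{C_n}$; $\mathbb{E}[B],\mathbb{E}[D]$ are known constants. $\mathrm{Corr}(B,D)=\mathrm{Cov}(B,D)/\sqrt{\mathrm{Var}(B)\mathrm{Var}(D)}$. *)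

(* Defs.v *)
From HB Require Import structures.
From mathcomp Require Import all_boot all_order all_algebra.
From mathcomp Require Import all_classical all_reals all_analysis.
Set Implicit Arguments. Unset Strict Implicit. Unset Printing Implicit Defensive.
Import Order.TTheory GRing.Theory Num.Theory.
Import numFieldNormedType.Exports.
Local Open Scope classical_set_scope.
Local Open Scope ring_scope.

Section defs.
Context {d : measure_display} {T : measurableType d} {R : realType}.
Variable P : probability T R.

(* real-valued expectation, variance, covariance (finite under finite
   second moments, so [fine] loses nothing) *)
Definition Ex (X : T -> R) : R := fine ('E_P[X])%E.
Definition Var (X : T -> R) : R := fine ('V_P[X])%E.
Definition Cov (X Y : T -> R) : R := fine (covariance P X Y).
Definition Corr (X Y : T -> R) : R := Cov X Y / Num.sqrt (Var X * Var Y).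

(* first-order (delta-method) variance of the ratio X/Z *)
Definition Phi (X Z : T -> R) : R :=
  Var X / Ex Z ^+ 2 + Ex X ^+ 2 / Ex Z ^+ 4 * Var Z
  - 2 * (Ex X / Ex Z ^+ 3) * Cov X Z.

Definition smean (n : nat) (X : 'I_n -> T -> R) : T -> R :=
  fun t => n%:R^-1 * \sum_(i < n) X i t.

Definition vec4 (A B C D : T -> R) : T -> R * R * R * R :=
  fun t => (A t, B t, C t, D t).

Definition iid_copies (n : nat) (A B C D : T -> R)
    (Ai Bi Ci Di : 'I_n -> T -> R) : Prop :=
  (forall i, measurable_fun setT (Ai i) /\ measurable_fun setT (Bi i) /\
             measurable_fun setT (Ci i) /\ measurable_fun setT (Di i)) /\
  (forall i (S : set (R * R * R * R)), measurable S ->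
     P (vec4 (Ai i) (Bi i) (Ci i) (Di i) @^-1` S) =
     P (vec4 A B C D @^-1` S)) /\
  (forall S : 'I_n -> set (R * R * R * R), (forall i, measurable (S i)) ->
     P (\bigcap_(i in [set: 'I_n]) (vec4 (Ai i) (Bi i) (Ci i) (Di i) @^-1` S i))
     = (\prod_(i < n) P (vec4 (Ai i) (Bi i) (Ci i) (Di i) @^-1` S i))%E).

End defs.

(* Main.v *)
From HB Require Import structures.
From mathcomp Require Import all_boot all_order all_algebra.
From mathcomp Require Import all_classical all_reals all_analysis.
From mathcomp Require Import measurable_realfun ring lra.
Require Import Defs.
Import Order.TTheory GRing.Theory Num.Theory.
Import numFieldNormedType.Exports.
Local Open Scope classical_set_scope.
Local Open Scope ring_scope.

Section indep.
Local Open Scope ereal_scope.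
Context d (T : measurableType d) (R : realType) (P : probability T R).
Variables (X Y : T -> R) (hX : measurable_fun setT X) (hY : measurable_fun setT Y).
Hypothesis hind : forall A B, measurable A -> measurable B ->
  P (X @^-1` A `&` Y @^-1` B) = P (X @^-1` A) * P (Y @^-1` B).
Hypotheses (iX : P.-integrable setT (EFin \o X)) (iY : P.-integrable setT (EFin \o Y))
  (iXY : P.-integrable setT (EFin \o (X \* Y)%R)).
Let mX : {mfun T >-> R} := HB.pack X (isMeasurableFun.Build _ _ _ _ _ hX).
Let mY : {mfun T >-> R} := HB.pack Y (isMeasurableFun.Build _ _ _ _ _ hY).
Let hZ : measurable_fun setT (fun t => (X t, Y t)) := measurable_fun_pair hX hY.
Let mZ : {mfun T >-> (R * R)%type} := HB.pack (fun t => (X t, Y t)) (isMeasurableFun.Build _ _ _ _ _ hZ).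
Let m1 := distribution P mX.
Let m2 := distribution P mY.
Let m' := distribution P mZ.

Let iid1 : m1.-integrable setT EFin.
Proof.
apply/integrableP; split; first exact/measurable_EFinP.
rewrite /m1 ge0_integral_distribution//; last first.
    by apply: measurableT_comp; [exact: abse_measurable|exact/measurable_EFinP].
by move/integrableP : iX => [].
Qed.

Let iid2 : m2.-integrable setT EFin.
Proof.
apply/integrableP; split; first exact/measurable_EFinP.
rewrite /m2 ge0_integral_distribution//; last first.
  by apply: measurableT_comp; [exact: abse_measurable|exact/measurable_EFinP].
by move/integrableP : iY => [].
Qed.

Lemma indep_int : \int[P]_t (X t * Y t)%:E = \int[P]_t (X t)%:E * \int[P]_t (Y t)%:E.
Proof.
have rect A B : measurable A -> measurable B -> m' (A `*` B) = m1 A * m2 B.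
  by move=> mA mB; rewrite /m' /m1 /m2 /distribution /pushforward /= -hind.
have eqm := product_measure_unique rect.
pose h := fun z : R * R => (z.1 * z.2)%R%:E.
have mh : measurable_fun setT h.
  apply/measurable_EFinP; apply: measurable_funM.
    exact: measurable_fst.
  exact: measurable_snd.
have E1 : \int[P]_t (X t * Y t)%:E = \int[m']_z h z.
  by rewrite /m' integral_distribution.
have E2 : \int[m']_z h z = \int[m1 \x m2]_z h z.
  apply: eq_measure_integral => A mA _.
    exact/esym/eqm.
have mabs : measurable_fun setT (fun y : R => `|y|%:E).
  by apply/measurable_EFinP; exact: normr_measurable.
have inner (x : R) : \int[m2]_y `|x * y|%:E = `|x|%:E * \int[m2]_y `|y|%:E.
  under eq_integral => y _ do rewrite normrM EFinM.
  by apply: ge0_integralZl => // y _; rewrite lee_fin.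
have ih : (m1 \x m2).-integrable setT h.
  apply/integrable12ltyP => //.
  rewrite /h /=.
  under eq_integral => x _ do rewrite inner.
  rewrite (@ge0_integralZr _ _ _ m1 setT measurableT _ mabs).
  3: by apply: integral_ge0 => y _; rewrite lee_fin.
  2: by move=> y _; rewrite lee_fin.
  move/integrableP : iid1 => [_ f1]; move/integrableP : iid2 => [_ f2].
  apply: lte_mul_pinfty.
  - by apply: integral_ge0 => y _; rewrite lee_fin.
  - by rewrite ge0_fin_numE//; apply: integral_ge0 => y _; rewrite lee_fin.
  - by [].
have cE : \int[m2]_y y%:E = (fine (\int[m2]_y y%:E))%:E.
  by rewrite fineK// (integrable_fin_num measurableT iid2).
rewrite E1 E2 -(integral12_prod_meas1 ih) /fubini_F /h /=.
under eq_integral => x _ do rewrite (integralZl measurableT iid2 x) cE.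
rewrite (integralZr measurableT iid1) -cE.
by rewrite /m1 /m2 !integral_distribution.
Qed.
End indep.

Section gen.
Context {d : measure_display} {T : measurableType d} {R : realType} {P : probability T R}.
Local Notation L2 := (Lfun P 2%:E).

Let Pfin : P setT \is a fin_num. Proof. exact: fin_num_measure. Qed.

Lemma L2_L1 {X : T -> R} : X \in L2 -> X \in Lfun P 1.
Proof. exact: Lfun_subset12. Qed.

Lemma L2_cst c : cst c \in L2. Proof. exact: Lfun_cst. Qed.
Lemma L2_scale a (X : T -> R) : X \in L2 -> (a \o* X) \in L2.
Proof. by move=> hX; apply: Lfun_scale => //; rewrite ler1n. Qed.
Lemma L2_add (X Y : T -> R) : X \in L2 -> Y \in L2 -> (X \+ Y) \in L2.
Proof.
move=> hX hY; have := (Lfun_addr_closed P (p:=2%:E) _).2 X Y hX hY; apply.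
by rewrite lee_fin ler1n.
Qed.

Lemma cov_fin {X Y : T -> R} : X \in L2 -> Y \in L2 ->
  covariance P X Y = (Cov P X Y)%:E.
Proof.
move=> hX hY; rewrite /Cov fineK// covariance_fin_num//; try exact: L2_L1.
exact: Lfun2_mul_Lfun1.
Qed.

Lemma ex_fin {X : T -> R} : X \in Lfun P 1 -> ('E_P[X])%E = (Ex P X)%:E.
Proof. by move=> hX; rewrite /Ex fineK// expectation_fin_num. Qed.

Lemma CovC (X Y : T -> R) : Cov P X Y = Cov P Y X.
Proof. by rewrite /Cov covarianceC. Qed.

Lemma CovDl (X Y Z : T -> R) : X \in L2 -> Y \in L2 -> Z \in L2 ->
  Cov P (X \+ Y) Z = Cov P X Z + Cov P Y Z.
Proof.
move=> hX hY hZ; apply: EFin_inj.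
by rewrite -cov_fin ?L2_add// covarianceDl// !cov_fin.
Qed.

Lemma CovZl a (X Z : T -> R) : X \in L2 -> Z \in L2 ->
  Cov P (a \o* X) Z = a * Cov P X Z.
Proof.
move=> hX hZ; apply: EFin_inj.
rewrite -cov_fin ?L2_scale// covarianceZl ?cov_fin//; try exact: L2_L1.
exact: Lfun2_mul_Lfun1.
Qed.

Lemma Cov_cstl c (Z : T -> R) : Cov P (cst c) Z = 0.
Proof. by rewrite /Cov covariance_cst_l. Qed.

Lemma ExD (X Y : T -> R) : X \in Lfun P 1 -> Y \in Lfun P 1 ->
  Ex P (X \+ Y) = Ex P X + Ex P Y.
Proof. by move=> hX hY; rewrite /Ex expectationD// !ex_fin. Qed.

Lemma ExZ a (X : T -> R) : X \in Lfun P 1 -> Ex P (a \o* X) = a * Ex P X.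
Proof. by move=> hX; rewrite /Ex expectationZl// ex_fin. Qed.

Lemma Ex_cst c : Ex P (cst c) = c.
Proof. by rewrite /Ex expectation_cst. Qed.

Lemma Ex_lin k a b (X Y : T -> R) : X \in L2 -> Y \in L2 ->
  Ex P (fun t => k + a * X t + b * Y t) = k + a * Ex P X + b * Ex P Y.
Proof.
move=> hX hY.
have -> : (fun t => k + a * X t + b * Y t) = (cst k \+ a \o* X) \+ b \o* Y by apply/funext => t /=; ring.
have h1 : (cst k \+ a \o* X) \in L2 by apply: L2_add; [exact: L2_cst|exact: L2_scale].
rewrite ExD; [|exact: L2_L1|exact/L2_L1/L2_scale].
rewrite ExD; [|exact/L2_L1/L2_cst|exact/L2_L1/L2_scale].
by rewrite Ex_cst !ExZ //; exact: L2_L1.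
Qed.

Lemma Cov_lin k a b l c e (X Y U V : T -> R) :
  X \in L2 -> Y \in L2 -> U \in L2 -> V \in L2 ->
  Cov P (fun t => k + a * X t + b * Y t) (fun t => l + c * U t + e * V t) =
  a * c * Cov P X U + a * e * Cov P X V + b * c * Cov P Y U + b * e * Cov P Y V.
Proof.
move=> hX hY hU hV.
have -> : (fun t => k + a * X t + b * Y t) = (cst k \+ a \o* X) \+ b \o* Y by apply/funext => t /=; ring.
have -> : (fun t => l + c * U t + e * V t) = (cst l \+ c \o* U) \+ e \o* V by apply/funext => t /=; ring.
have hK1 : (cst k \+ a \o* X) \in L2 by apply: L2_add; [exact: L2_cst|exact: L2_scale].
have hK2 : (cst l \+ c \o* U) \in L2 by apply: L2_add; [exact: L2_cst|exact: L2_scale].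
have hW : ((cst l \+ c \o* U) \+ e \o* V) \in L2 by apply: L2_add => //; exact: L2_scale.
rewrite CovDl //; last exact: L2_scale.
rewrite CovDl //; [|exact: L2_cst|exact: L2_scale].
rewrite Cov_cstl !CovZl //.
rewrite (CovC X) (CovC Y).
rewrite CovDl //; last exact: L2_scale.
rewrite CovDl //; [|exact: L2_cst|exact: L2_scale].
rewrite Cov_cstl !CovZl //.
rewrite CovDl //; last exact: L2_scale.
rewrite CovDl //; [|exact: L2_cst|exact: L2_scale].
rewrite Cov_cstl !CovZl //.
rewrite (CovC U X) (CovC V X) (CovC U Y) (CovC V Y).
ring.
Qed.


Lemma L2_sum (I : Type) (s : seq I) (F : I -> T -> R) : (forall i, F i \in L2) ->
  (fun t => \sum_(i <- s) F i t) \in L2.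
Proof.
move=> hF; elim: s => [|x s IH].
  have -> : (fun t => \sum_(i <- [::]) F i t) = cst 0 by apply/funext => t; rewrite big_nil.
  exact: L2_cst.
have -> : (fun t => \sum_(i <- x :: s) F i t) = F x \+ (fun t => \sum_(i <- s) F i t).
  by apply/funext => t; rewrite big_cons.
exact: L2_add.
Qed.

Lemma Cov_sum (I : Type) (s : seq I) (F : I -> T -> R) (Z : T -> R) :
  (forall i, F i \in L2) -> Z \in L2 ->
  Cov P (fun t => \sum_(i <- s) F i t) Z = \sum_(i <- s) Cov P (F i) Z.
Proof.
move=> hF hZ; elim: s => [|x s IH].
  have -> : (fun t => \sum_(i <- [::]) F i t) = cst 0 by apply/funext => t; rewrite big_nil.
  by rewrite Cov_cstl big_nil.
have -> : (fun t => \sum_(i <- x :: s) F i t) = F x \+ (fun t => \sum_(i <- s) F i t).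
  by apply/funext => t; rewrite big_cons.
by rewrite CovDl ?big_cons ?IH //; exact: L2_sum.
Qed.

Lemma Ex_sum (I : Type) (s : seq I) (F : I -> T -> R) : (forall i, F i \in L2) ->
  Ex P (fun t => \sum_(i <- s) F i t) = \sum_(i <- s) Ex P (F i).
Proof.
move=> hF; elim: s => [|x s IH].
  have -> : (fun t => \sum_(i <- [::]) F i t) = cst 0 by apply/funext => t; rewrite big_nil.
  by rewrite Ex_cst big_nil.
have -> : (fun t => \sum_(i <- x :: s) F i t) = F x \+ (fun t => \sum_(i <- s) F i t).
  by apply/funext => t; rewrite big_cons.
by rewrite ExD ?big_cons ?IH //; apply: L2_L1 => //; exact: L2_sum.
Qed.

Lemma smeanE n (F : 'I_n -> T -> R) :
  smean F = n%:R^-1 \o* (fun t => \sum_(i < n) F i t).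
Proof. by apply/funext => t /=; rewrite /smean mulrC. Qed.

Lemma smean_L2 n (F : 'I_n -> T -> R) : (forall i, F i \in L2) -> smean F \in L2.
Proof. by move=> hF; rewrite smeanE; apply: L2_scale; exact: L2_sum. Qed.

Lemma Cov_smean n (F G : 'I_n -> T -> R) : (forall i, F i \in L2) -> (forall i, G i \in L2) ->
  Cov P (smean F) (smean G) = n%:R^-1 * n%:R^-1 * \sum_(i < n) \sum_(j < n) Cov P (F i) (G j).
Proof.
move=> hF hG; rewrite !smeanE CovZl; [|exact: L2_sum|exact/L2_scale/L2_sum].
rewrite CovC CovZl; [|exact: L2_sum|exact: L2_sum].
rewrite Cov_sum //; last exact: L2_sum.
rewrite mulrA; congr (_ * _); rewrite [RHS]exchange_big; apply: eq_bigr => i _.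
by rewrite CovC Cov_sum.
Qed.

Lemma Ex_smean n (F : 'I_n -> T -> R) : (forall i, F i \in L2) ->
  Ex P (smean F) = n%:R^-1 * \sum_(i < n) Ex P (F i).
Proof.
move=> hF; rewrite smeanE ExZ ?Ex_sum//; apply: L2_L1; exact: L2_sum.
Qed.

Lemma Cov_smean_iid n (F G : 'I_n -> T -> R) c : (0 < n)%N ->
  (forall i, F i \in L2) -> (forall i, G i \in L2) ->
  (forall i, Cov P (F i) (G i) = c) ->
  (forall i j, i != j -> Cov P (F i) (G j) = 0) ->
  Cov P (smean F) (smean G) = c / n%:R.
Proof.
move=> n0 hF hG hd ho; rewrite Cov_smean//.
rewrite (eq_bigr (fun=> c)); last first.
  move=> i _; rewrite (bigD1 i)//= hd big1 ?addr0// => j ji.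
  by apply: ho; rewrite eq_sym.
rewrite sumr_const card_ord -mulr_natl.
have n0' : n%:R != 0 :> R by rewrite pnatr_eq0 -lt0n.
by field.
Qed.

Lemma Ex_smean_iid n (F : 'I_n -> T -> R) e : (0 < n)%N ->
  (forall i, F i \in L2) -> (forall i, Ex P (F i) = e) -> Ex P (smean F) = e.
Proof.
move=> n0 hF he; rewrite Ex_smean// (eq_bigr (fun=> e)) // sumr_const card_ord -mulr_natl.
have n0' : n%:R != 0 :> R by rewrite pnatr_eq0 -lt0n.
by field.
Qed.

End gen.

Section copies.
Context d (T : measurableType d) (R : realType) (P : probability T R).
Local Notation R4 := (R * R * R * R)%type.
Variables (n : nat) (V : 'I_n -> T -> R4) (V0 : T -> R4).
Hypotheses (mV : forall i, measurable_fun setT (V i)) (mV0 : measurable_fun setT V0).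
Hypothesis law : forall i (S : set R4), measurable S -> P (V i @^-1` S) = P (V0 @^-1` S).

Lemma transfer_ge0 i (h : R4 -> \bar R) : measurable_fun setT h -> (forall v, (0 <= h v)%E) ->
  (\int[P]_t h (V i t) = \int[P]_t h (V0 t))%E.
Proof.
move=> mh h0.
pose Xi : {mfun T >-> R4} := HB.pack (V i) (isMeasurableFun.Build _ _ _ _ _ (mV i)).
pose X0 : {mfun T >-> R4} := HB.pack V0 (isMeasurableFun.Build _ _ _ _ _ mV0).
have -> : (\int[P]_t h (V i t) = \int[distribution P Xi]_y h y)%E.
  by rewrite ge0_integral_distribution.
have -> : (\int[P]_t h (V0 t) = \int[distribution P X0]_y h y)%E.
  by rewrite ge0_integral_distribution.
apply: eq_measure_integral => A mA _.
have := law i; move=> L; apply: L.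
exact: mA.
Qed.

Lemma transfer_int i (h : R4 -> \bar R) : measurable_fun setT h ->
  P.-integrable setT (h \o V0) ->
  P.-integrable setT (h \o V i) /\ (\int[P]_t h (V i t) = \int[P]_t h (V0 t))%E.
Proof.
move=> mh ih0.
have ihi : P.-integrable setT (h \o V i).
  apply/integrableP; split; first exact: measurableT_comp.
  move/integrableP : ih0 => [_]; rewrite /=.
  rewrite (transfer_ge0 i (fun v => `|h v|)%E)//.
  exact: measurableT_comp.
split => //.
pose Xi : {mfun T >-> R4} := HB.pack (V i) (isMeasurableFun.Build _ _ _ _ _ (mV i)).
pose X0 : {mfun T >-> R4} := HB.pack V0 (isMeasurableFun.Build _ _ _ _ _ mV0).
have -> : (\int[P]_t h (V i t) = \int[distribution P Xi]_y h y)%E.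
  by rewrite integral_distribution.
have -> : (\int[P]_t h (V0 t) = \int[distribution P X0]_y h y)%E.
  by rewrite integral_distribution.
apply: eq_measure_integral => A mA _.
have := law i; move=> L; apply: L.
exact: mA.
Qed.

Lemma copy_L1 i (f : R4 -> R) : measurable_fun setT f -> (f \o V0) \in Lfun P 1 ->
  (f \o V i) \in Lfun P 1 /\ Ex P (f \o V i) = Ex P (f \o V0).
Proof.
move=> mf /Lfun1_integrable h0.
have mEf : measurable_fun setT (EFin \o f) by exact/measurable_EFinP.
have [hi he] := @transfer_int i (EFin \o f) mEf h0.
split; first exact/Lfun1_integrable.
by rewrite /Ex !unlock /= he.
Qed.

Lemma copy_L2 i (f : R4 -> R) : measurable_fun setT f -> (f \o V0) \in Lfun P 2%:E ->
  (f \o V i) \in Lfun P 2%:E.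
Proof.
move=> mf; rewrite !inE => /andP[_]; rewrite !inE /= /finite_norm unlock => h.
apply/andP; split; first by rewrite inE /=; exact: measurableT_comp.
rewrite inE /= /finite_norm unlock.
have mh : measurable_fun setT (fun v : R4 => (`|(f v)%:E| `^ 2)%E).
  have -> : (fun v : R4 => (`|(f v)%:E| `^ 2)%E) = (fun v => (`|f v| `^ 2)%:E).
    by apply/funext => v; rewrite abse_EFin poweR_EFin.
  apply/measurable_EFinP; apply: (measurableT_comp (measurable_powR _)) => //.
  exact: measurableT_comp.
suff -> : (\int[P]_x `|(EFin \o (f \o V i)) x| `^ 2 =
           \int[P]_x `|(EFin \o (f \o V0)) x| `^ 2)%E by [].
have E := transfer_ge0 i _ mh (fun v => poweR_ge0 _ _).
exact E.
Qed.

Hypothesis ind : forall i j, i != j -> forall (S1 S2 : set R4), measurable S1 -> measurable S2 ->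
  P (V i @^-1` S1 `&` V j @^-1` S2) = (P (V i @^-1` S1) * P (V j @^-1` S2))%E.

Local Notation L2 := (Lfun P 2%:E).

Lemma CovE (X Y : T -> R) : X \in L2 -> Y \in L2 ->
  Cov P X Y = Ex P (fun t => X t * Y t) - Ex P X * Ex P Y.
Proof.
move=> hX hY; apply: EFin_inj.
have X1 := L2_L1 hX; have Y1 := L2_L1 hY.
have XY1 : (X \* Y) \in Lfun P 1 by exact: Lfun2_mul_Lfun1.
rewrite -cov_fin// covarianceE//.
by rewrite (ex_fin XY1) (ex_fin X1) (ex_fin Y1) -EFinM -EFinB.
Qed.

Lemma copy_Cov i (f g : R4 -> R) : measurable_fun setT f -> measurable_fun setT g ->
  (f \o V0) \in L2 -> (g \o V0) \in L2 ->
  Cov P (f \o V i) (g \o V i) = Cov P (f \o V0) (g \o V0).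
Proof.
move=> mf mg hf hg.
rewrite !CovE ?copy_L2//.
have mfg : measurable_fun setT (fun v => f v * g v) by exact: measurable_funM.
have hfg : ((fun v => f v * g v) \o V0) \in Lfun P 1 by exact: Lfun2_mul_Lfun1.
have E1 : Ex P (fun t => f (V i t) * g (V i t)) = Ex P (fun t => f (V0 t) * g (V0 t)) :=
  (copy_L1 i _ mfg hfg).2.
have E2 := (copy_L1 i _ mf (L2_L1 hf)).2.
have E3 := (copy_L1 i _ mg (L2_L1 hg)).2.
by rewrite /= E1 E2 E3.
Qed.

Lemma copy_indep i j (ij : i != j) (f g : R4 -> R) : measurable_fun setT f -> measurable_fun setT g ->
  (f \o V0) \in L2 -> (g \o V0) \in L2 ->
  Cov P (f \o V i) (g \o V j) = 0.
Proof.
move=> mf mg hf hg.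
have hfi := copy_L2 i _ mf hf; have hgj := copy_L2 j _ mg hg.
rewrite CovE//.
have hX : measurable_fun setT (f \o V i) by exact: measurableT_comp.
have hY : measurable_fun setT (g \o V j) by exact: measurableT_comp.
have hind : forall A B, measurable A -> measurable B ->
    P ((f \o V i) @^-1` A `&` (g \o V j) @^-1` B) =
    (P ((f \o V i) @^-1` A) * P ((g \o V j) @^-1` B))%E.
  move=> A B mA mB.
  have mfA : measurable (f @^-1` A) by have := mf measurableT A mA; rewrite setTI.
  have mgB : measurable (g @^-1` B) by have := mg measurableT B mB; rewrite setTI.
  have := ind i j ij (f @^-1` A) (g @^-1` B); move=> L; apply: L.
  - exact: mfA.
  - exact: mgB.
have iX : P.-integrable setT (EFin \o (f \o V i)) by exact/Lfun1_integrable/L2_L1.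
have iY : P.-integrable setT (EFin \o (g \o V j)) by exact/Lfun1_integrable/L2_L1.
have iXY : P.-integrable setT (EFin \o ((f \o V i) \* (g \o V j))%R).
  by apply/Lfun1_integrable; exact: Lfun2_mul_Lfun1.
have E := @indep_int _ _ _ P _ _ hX hY hind iX iY iXY.
rewrite /Ex !unlock.
rewrite /= in E; rewrite E fineM ?subrr//; exact: integrable_fin_num.
Qed.

End copies.

Theorem mainTheorem6 (d : measure_display) (T : measurableType d)
  (R : realType) (P : probability T R) (A B C D : T -> R)
  (hA : A \in Lfun P 2%:E) (hB : B \in Lfun P 2%:E)
  (hC : C \in Lfun P 2%:E) (hD : D \in Lfun P 2%:E)
  (hVB : 0 < Var P B) (hVD : 0 < Var P D)
  (hcorr : `|Corr P B D| < 1)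
  (hEA : Ex P A != 0) (hEC : Ex P C != 0)
  (n : nat) (hn : (0 < n)%N) (Ai Bi Ci Di : 'I_n -> T -> R)
  (hiid : iid_copies P A B C D Ai Bi Ci Di) :
  let Rr := Ex P A / Ex P C in
  let den := Var P B * Var P D - Cov P B D ^+ 2 in
  let alpha_o := (Var P D * Cov P A B - Rr * Var P D * Cov P B C
                  + Rr * Cov P B D * Cov P C D - Cov P B D * Cov P A D) / den in
  let beta_o := (Cov P B D * Cov P A B - Rr * Cov P B D * Cov P B C
                 + Rr * Var P B * Cov P C D - Var P B * Cov P A D) / (Rr * den) in
  let N := fun t => smean Ai t + alpha_o * (Ex P B - smean Bi t) in
  let M := fun t => smean Ci t + beta_o * (Ex P D - smean Di t) in
  let W := fun t => (Rr * Cov P B C - Cov P A B) * D t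
                    - (Rr * Cov P C D - Cov P A D) * B t in
  Phi P N M - Phi P (smean Ai) (smean Ci)
    = - (n%:R * Ex P C ^+ 2)^-1 * (Var P W / den)
  /\ - (n%:R * Ex P C ^+ 2)^-1 * (Var P W / den) <= 0.
Proof.
move=> Rr den alpha_o beta_o N M W.
have mfunL (X : T -> R) : X \in Lfun P 2%:E -> measurable_fun setT X.
  by rewrite inE => /andP[]; rewrite inE.
have [hm [hlaw hind]] := hiid.
pose V i := vec4 (Ai i) (Bi i) (Ci i) (Di i).
pose V0 := vec4 A B C D.
have mV i : measurable_fun setT (V i).
  have [mA [mB [mC mD]]] := hm i.
  apply: measurable_fun_pair => //; apply: measurable_fun_pair => //.
  exact: measurable_fun_pair.
have mV0 : measurable_fun setT V0.
  apply: measurable_fun_pair; last exact: mfunL.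
  apply: measurable_fun_pair; last exact: mfunL.
  by apply: measurable_fun_pair; exact: mfunL.
have law : forall i S, measurable S -> P (V i @^-1` S) = P (V0 @^-1` S) := hlaw.
have ind : forall i j, i != j -> forall (S1 S2 : set (R * R * R * R)),
    measurable S1 -> measurable S2 ->
    P (V i @^-1` S1 `&` V j @^-1` S2) = (P (V i @^-1` S1) * P (V j @^-1` S2))%E.
  move=> i j ij S1 S2 m1 m2.
  pose S k := if k == i then S1 else if k == j then S2 else setT.
  have mS k : measurable (S k).
    by rewrite /S; case: ifP => _ //; case: ifP.
  have := hind S mS.
  have -> : \bigcap_(k in [set: 'I_n]) (vec4 (Ai k) (Bi k) (Ci k) (Di k) @^-1` S k) =
      V i @^-1` S1 `&` V j @^-1` S2.
    apply/seteqP; split => t.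
      move=> H; split.
        by have := H i I; rewrite /S eqxx.
      by have := H j I; rewrite /S eq_sym (negbTE ij) eqxx.
    move=> [h1 h2] k _; rewrite /S /=.
    by case: eqP => [->//|_]; case: eqP => [->//|_].
  move=> ->.
  rewrite (bigD1 i) //= (bigD1 j) /=; last by rewrite eq_sym.
  rewrite big1 ?mule1.
    by rewrite /S eqxx eq_sym (negbTE ij) eqxx.
  move=> k /andP[ki kj].
  by rewrite /S (negbTE ki) (negbTE kj) preimage_setT probability_setT.
have cL2 := @copy_L2 _ _ _ P n V V0 mV mV0 law.
have cL1 := @copy_L1 _ _ _ P n V V0 mV mV0 law.
have cCov := @copy_Cov _ _ _ P n V V0 mV mV0 law.
have cInd := @copy_indep _ _ _ P n V V0 mV mV0 law ind.
have key (f g : R * R * R * R -> R) : measurable_fun setT f -> measurable_fun setT g ->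
    (f \o V0) \in Lfun P 2%:E -> (g \o V0) \in Lfun P 2%:E ->
    Cov P (smean (fun i => f \o V i)) (smean (fun i => g \o V i)) =
    Cov P (f \o V0) (g \o V0) / n%:R.
  move=> mf mg hf hg; apply: Cov_smean_iid => //.
  - by move=> i; exact: cL2.
  - by move=> i; exact: cL2.
  - by move=> i; exact: cCov.
  - by move=> i j ij; exact: cInd.
have keyE (f : R * R * R * R -> R) : measurable_fun setT f ->
    (f \o V0) \in Lfun P 2%:E ->
    Ex P (smean (fun i => f \o V i)) = Ex P (f \o V0).
  move=> mf hf; apply: Ex_smean_iid => //.
  - by move=> i; exact: cL2.
  - by move=> i; exact: (cL1 i f mf (L2_L1 hf)).2.
pose pA := fun v : R * R * R * R => v.1.1.1.
pose pB := fun v : R * R * R * R => v.1.1.2.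
pose pC := fun v : R * R * R * R => v.1.2.
pose pD := fun v : R * R * R * R => v.2.
have mpA : measurable_fun setT pA.
  by apply: measurableT_comp => //; apply: measurableT_comp.
have mpB : measurable_fun setT pB.
  by apply: measurableT_comp => //; apply: measurableT_comp.
have mpC : measurable_fun setT pC by apply: measurableT_comp.
have mpD : measurable_fun setT pD by exact: measurable_snd.
have hAi : forall i, Ai i \in Lfun P 2%:E := fun i => cL2 i pA mpA hA.
have hBi : forall i, Bi i \in Lfun P 2%:E := fun i => cL2 i pB mpB hB.
have hCi : forall i, Ci i \in Lfun P 2%:E := fun i => cL2 i pC mpC hC.
have hDi : forall i, Di i \in Lfun P 2%:E := fun i => cL2 i pD mpD hD.
have sA := smean_L2 _ _ hAi; have sB := smean_L2 _ _ hBi.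
have sC := smean_L2 _ _ hCi; have sD := smean_L2 _ _ hDi.
have EsA : Ex P (smean Ai) = Ex P A := keyE pA mpA hA.
have EsB : Ex P (smean Bi) = Ex P B := keyE pB mpB hB.
have EsC : Ex P (smean Ci) = Ex P C := keyE pC mpC hC.
have EsD : Ex P (smean Di) = Ex P D := keyE pD mpD hD.
have cAA : Cov P (smean Ai) (smean Ai) = Cov P A A / n%:R := key _ _ mpA mpA hA hA.
have cAB : Cov P (smean Ai) (smean Bi) = Cov P A B / n%:R := key _ _ mpA mpB hA hB.
have cBA : Cov P (smean Bi) (smean Ai) = Cov P A B / n%:R.
  by rewrite CovC; exact: cAB.
have cBB : Cov P (smean Bi) (smean Bi) = Cov P B B / n%:R := key _ _ mpB mpB hB hB.
have cCC : Cov P (smean Ci) (smean Ci) = Cov P C C / n%:R := key _ _ mpC mpC hC hC.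
have cCD : Cov P (smean Ci) (smean Di) = Cov P C D / n%:R := key _ _ mpC mpD hC hD.
have cDC : Cov P (smean Di) (smean Ci) = Cov P C D / n%:R.
  by rewrite CovC; exact: cCD.
have cDD : Cov P (smean Di) (smean Di) = Cov P D D / n%:R := key _ _ mpD mpD hD hD.
have cAC : Cov P (smean Ai) (smean Ci) = Cov P A C / n%:R := key _ _ mpA mpC hA hC.
have cAD : Cov P (smean Ai) (smean Di) = Cov P A D / n%:R := key _ _ mpA mpD hA hD.
have cBC : Cov P (smean Bi) (smean Ci) = Cov P B C / n%:R := key _ _ mpB mpC hB hC.
have cBD : Cov P (smean Bi) (smean Di) = Cov P B D / n%:R := key _ _ mpB mpD hB hD.
have VarE (X : T -> R) : Var P X = Cov P X X by [].
have NE : N = (fun t => alpha_o * Ex P B + 1 * smean Ai t + (- alpha_o) * smean Bi t).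
  by apply/funext => t; rewrite /N; ring.
have ME : M = (fun t => beta_o * Ex P D + 1 * smean Ci t + (- beta_o) * smean Di t).
  by apply/funext => t; rewrite /M; ring.
have WE : W = (fun t => 0 + (Rr * Cov P B C - Cov P A B) * D t
                  + (- (Rr * Cov P C D - Cov P A D)) * B t).
  by apply/funext => t; rewrite /W; ring.
have n0 : n%:R != 0 :> R by rewrite pnatr_eq0 -lt0n.
have VB0 : 0 < Cov P B B by rewrite -VarE.
have VD0 : 0 < Cov P D D by rewrite -VarE.
have den0 : 0 < den.
  rewrite /den !VarE.
  move: hcorr; rewrite /Corr !VarE.
  set c := Cov P B D.
  have s0 : 0 < Num.sqrt (Cov P B B * Cov P D D) by rewrite sqrtr_gt0 mulr_gt0.
  rewrite normrM normfV (gtr0_norm s0) ltr_pdivrMr // mul1r => hc.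
  have hs : Num.sqrt (Cov P B B * Cov P D D) ^+ 2 = Cov P B B * Cov P D D.
    by rewrite sqr_sqrtr // mulr_ge0 // ltW.
  rewrite -hs -(real_normK (num_real c)).
  have := normr_ge0 c; move: hc.
  set s := Num.sqrt _; set a := `|c|.
  move=> h1 h2; nra.
have VW0 : 0 <= Var P W by rewrite /Var fine_ge0 // variance_ge0.
have EC2 : 0 < n%:R * Ex P C ^+ 2.
  by rewrite mulr_gt0 ?ltr0n // exprn_even_gt0.
split; last first.
  rewrite mulNr oppr_le0; apply: mulr_ge0; first by rewrite invr_ge0 ltW.
  by apply: divr_ge0 => //; exact: ltW.
rewrite /Phi !VarE NE ME WE.
rewrite !Cov_lin // !Ex_lin //.
rewrite cAA cAB cBA cBB cCC cCD cDC cDD cAC cAD cBC cBD EsA EsB EsC EsD.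
rewrite (CovC D B).
have -> : beta_o * Ex P D + 1 * Ex P C + - beta_o * Ex P D = Ex P C by ring.
have -> : alpha_o * Ex P B + 1 * Ex P A + - alpha_o * Ex P B = Ex P A by ring.
have hden : den != 0 by rewrite gt_eqF.
move: hden; rewrite /alpha_o /beta_o /den /Rr !VarE => hden.
field.
by rewrite hden hEC n0 hEA.
Qed.
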